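(* Consider $n\ge 3$ agents with additive, identical, normalized valuations, and online algorithms without access to predictions. For any given $a\in(0,1]$, there is no online algorithm that guarantees an $a$-EFX allocation, even if the time horizon $T$ is known to the algorithm in advance.
   Context: Online fair division model: there is a set $N=[n]$ of agents and goods $g_1,\dots,g_T$ arriving one per time step. Each agent $i$ has an additive normalized valuation $v_i$ ($v_i(g_t)\ge0$, $\sum_{t=1}^T v_i(g_t)=1$, $v_i(S)=\sum_{g\in S}v_i(g)$); identical valuations means $v_i=v$ for all $i$. When $g_t$ arrives, its true values are revealed and it must be immediately and irrevocably allocated to one agent. For a bundle $S\ne\emptyset$ and valuation $f$, $\bar S^f=S\setminus\{g\}$ with $g\in\arg\max_{g'\in S}f(S\setminus\{g'\})$, and $\bar\emptyset^f=\emptyset$. For $a\in[0,1]$, an allocation $(A_1,\dots,A_n)$ is $a$-EFX if $v_i(A_i)\ge a\cdot v_i(\bar{A_j}^{v_i})$ for all $i,j$. An algorithm guarantees an $a$-EFX allocation if for every admissible input the final allocation is $a$-EFX with respect to the true valuations. *)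

(* Defs.v *)
From HB Require Import structures.
From mathcomp Require Import all_boot all_order all_algebra.
From mathcomp Require Import reals.
Set Implicit Arguments. Unset Strict Implicit. Unset Printing Implicit Defensive.
Import Order.TTheory GRing.Theory Num.Theory.
Local Open Scope ring_scope.

Section OnlineFD.
Variable R : realType.

Definition bval (I : finType) (v : I -> R) (S : {set I}) : R :=
  \sum_(g in S) v g.

Definition barset (I : finType) (v : I -> R) (S : {set I}) : {set I} :=
  match [pick g in S] with
  | None => set0
  | Some g0 => S :\ Order.arg_max g0 (fun g => g \in S) (fun g => bval v (S :\ g))
  end.

Definition aEFX (n : nat) (I : finType) (v : I -> R) (a : R)
    (A : 'I_n -> {set I}) : Prop :=
  forall i j : 'I_n, a * bval v (barset v (A j)) <= bval v (A i).

(* A deterministic online algorithm (for fixed n and known horizon T) decides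
   the recipient of good g_t from the values of g_1..g_t revealed so far
   (a sequence of length t); its own past decisions are determined by these. *)
Definition online_alloc (n T : nat) (alg : seq R -> 'I_n) (vals : seq R)
    : 'I_n -> {set 'I_T} :=
  fun i => [set t : 'I_T | alg (take t.+1 vals) == i].

End OnlineFD.

(* Main.v *)
Require Import Defs.
From HB Require Import structures.
From mathcomp Require Import all_boot all_order all_algebra.
From mathcomp Require Import reals.
From mathcomp Require Import lra zify.
Import Order.TTheory GRing.Theory Num.Theory.
Local Open Scope ring_scope.

Section Helpers.
Variable R : realType.
Set Implicit Arguments. Unset Strict Implicit.

Lemma bval_sub (I : finType) (v : I -> R) (A B : {set I}) :
  (forall g, 0 <= v g) -> A \subset B -> bval v A <= bval v B.
Proof.
move=> v0 /subsetP AB; rewrite /bval [X in X <= _]big_mkcond [X in _ <= X]big_mkcond.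
apply: ler_sum => g _; case: ifP => gA; first by rewrite (AB g gA).
by case: ifP.
Qed.

Lemma bval_ge1 (I : finType) (v : I -> R) (A : {set I}) g :
  (forall g, 0 <= v g) -> g \in A -> v g <= bval v A.
Proof.
move=> v0 gA; have -> : v g = bval v [set g] by rewrite /bval big_set1.
by apply: bval_sub => //; rewrite sub1set.
Qed.

Lemma barset_ge (I : finType) (v : I -> R) (S : {set I}) g :
  g \in S -> bval v (S :\ g) <= bval v (barset v S).
Proof.
move=> gS; rewrite /barset; case: pickP => [g0 Hg0|H]; last by have := H g; rewrite /= gS.
case: arg_maxP => //= h hS hmax.
exact: hmax.
Qed.

Lemma aux1 m : (m.+3 < m.+2)%N = false. Proof. lia. Qed.
Lemma aux2 m : (m.+2 < m.+4)%N. Proof. lia. Qed.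
Lemma aux3 m : (m.+2 != m.+3)%N. Proof. lia. Qed.

Lemma sum_nseq (k : nat) (p : R) : \sum_(x <- nseq k p) x = k%:R * p.
Proof. elim: k => [|k IH]; first by rewrite big_nil mul0r.
by rewrite /= big_cons IH mulrSr mulrDl mul1r addrC. Qed.

Lemma nth_vals (p y w : R) m t : (nseq m.+2 p ++ [:: y; w])`_t =
  if (t < m.+2)%N then p else if t == m.+2 then y else if t == m.+3 then w else 0.
Proof.
rewrite nth_cat size_nseq nth_nseq.
case: (ltnP t m.+2) => h //.
case E : (t - m.+2)%N => [|[|d]] /=.
- have : t = m.+2 by lia.
  move=> ->. by rewrite eqxx. 
- have -> : t = m.+3 by lia.
  have -> : (m.+3 == m.+2) = false by lia.
  by rewrite eqxx.
- rewrite nth_nil. have -> : (t == m.+2) = false by lia.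
  by have -> : (t == m.+3) = false by lia.
Qed.


Lemma main_m (m : nat) (alg : seq R -> 'I_m.+3) (a p q r : R) :
  0 < a -> 0 < p -> 0 <= q -> 0 <= r -> (m.+2)%:R * p + q + r = 1 ->
  p < a * q -> 1 - r < a * r ->
  exists vals : seq R,
   [/\ size vals = m.+4, all (fun x => 0 <= x) vals, \sum_(x <- vals) x = 1
    & ~ aEFX (fun t : 'I_(m.+4) => vals`_t) a (online_alloc (m.+4) alg vals)].
Proof.
move=> a0 p0 q0 r0 hsum hq hr.
have p0' : 0 <= p by exact: ltW.
pose c := fun t : 'I_m.+2 => alg (nseq t.+1 p).
have take_small y w (t : nat) : (t < m.+2)%N ->
    take t.+1 (nseq m.+2 p ++ [:: y; w]) = nseq t.+1 p.
  move=> ht; rewrite take_cat size_nseq; case: (ltnP t.+1 m.+2) => h2.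
    by rewrite take_nseq // ltnW.
  have e : t.+1 = m.+2 by lia.
  by rewrite e subnn take0 cats0.
have take_mid y w : take m.+3 (nseq m.+2 p ++ [:: y; w]) = nseq m.+2 p ++ [:: y].
  by rewrite take_cat size_nseq (_ : (m.+3 < m.+2)%N = false) ?subSnn //; lia.
have take_all y w : take m.+4 (nseq m.+2 p ++ [:: y; w]) = nseq m.+2 p ++ [:: y; w].
  by apply: take_oversize; rewrite size_cat size_nseq /=; lia.
have mem y w i (t : 'I_m.+4) :
   (t \in online_alloc (m.+4) alg (nseq m.+2 p ++ [:: y; w]) i)
     = (alg (take t.+1 (nseq m.+2 p ++ [:: y; w])) == i).
  by rewrite /online_alloc inE.
have vnn y w : 0 <= y -> 0 <= w -> forall t, 0 <= (nseq m.+2 p ++ [:: y; w])`_t.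
  move=> y0 w0 t; rewrite nth_vals; case: ifP => // _; case: ifP => // _; by case: ifP.
have le24 : (m.+2 <= m.+4)%N by lia.
case: (boolP [exists t1, exists t2, (t1 != t2) && (c t1 == c t2)]) =>
   [/existsP [t1 /existsP [t2 /andP [t12 /eqP ct]]] | /existsPn noc].
- set vals := nseq m.+2 p ++ [:: 0; q + r].
  exists vals; split.
  + by rewrite size_cat size_nseq /=; lia.
  + rewrite all_cat all_nseq /= p0' lexx addr_ge0 //; by rewrite orbT.
  + rewrite big_cat sum_nseq !big_cons big_nil /=; lra.
  move=> H.
  set Im := [set c t | t : 'I_m.+2].
  have cardIm : (#|Im| <= m.+1)%N.
    have sub : Im \subset [set c t | t in [set~ t1]].
      apply/subsetP => _ /imsetP [t _ ->]; case: (eqVneq t t1) => [->|ne].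
        by rewrite ct; apply: imset_f; rewrite !inE eq_sym.
      by apply: imset_f; rewrite !inE.
    apply: leq_trans (subset_leq_card sub) _.
    apply: leq_trans (leq_imset_card _ _) _.
    by rewrite cardsC1 card_ord.
  have : (1 < #|~: Im|)%N by have := cardsC Im; rewrite card_ord; lia.
  case/card_gt1P => e1 [e2 [He1 He2 e12]].
  set k := alg vals.
  pose i := if e1 == k then e2 else e1.
  have ik : i != k.
    rewrite /i; case: (eqVneq e1 k) => [e1k|//]; by rewrite -e1k eq_sym.
  have iIm : i \notin Im.
    by rewrite /i; case: ifP => _; rewrite -in_setC.
  have Ai0 : bval (fun t : 'I_m.+4 => vals`_t) (online_alloc (m.+4) alg vals i) = 0.
    rewrite /bval big1 // => t; rewrite mem => /eqP Ht.
    rewrite nth_vals.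
    case: (ltnP t m.+2) => h.
    + exfalso; move: iIm; rewrite -Ht take_small //.
      have -> : alg (nseq t.+1 p) = c (Ordinal h) by [].
      by rewrite /Im imset_f.
    + case: eqP => // h2; case: eqP => // h3; exfalso.
      move: Ht; rewrite h3 take_all => Ht.
      by move: ik; rewrite -Ht eqxx.
  set j := c t1.
  have Hbar : p <= bval (fun t : 'I_m.+4 => vals`_t)
                 (barset (fun t : 'I_m.+4 => vals`_t) (online_alloc (m.+4) alg vals j)).
    have w1in : widen_ord le24 t1 \in online_alloc (m.+4) alg vals j.
      by rewrite mem (take_small _ _ _ (ltn_ord t1)); apply/eqP.
    have w2in : widen_ord le24 t2 \in online_alloc (m.+4) alg vals j :\ widen_ord le24 t1.
      rewrite in_setD1 mem (take_small _ _ _ (ltn_ord t2)); apply/andP; split.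
        by rewrite -(inj_eq val_inj) /= (inj_eq val_inj) eq_sym.
      by apply/eqP; exact: (esym ct).
    apply: le_trans (barset_ge _ w1in).
    apply: le_trans (bval_ge1 _ w2in).
      by rewrite /vals nth_vals /= ltn_ord.
    by move=> g; apply: vnn; rewrite ?lexx ?addr_ge0.
  have := H i j; rewrite Ai0 => Hij.
  have := ler_wpM2l (ltW a0) Hbar.
  have : 0 < a * p by rewrite mulr_gt0.
  lra.
- have cinj : injective c.
    move=> t1 t2 e; apply/eqP; apply: contraT => ne.
    by move: (noc t1) => /existsPn /(_ t2); rewrite ne e eqxx.
  set vals := nseq m.+2 p ++ [:: q; r].
  have svals : size vals = m.+4 by rewrite size_cat size_nseq /=; lia.
  have hsv : \sum_(x <- vals) x = 1.
    by rewrite big_cat sum_nseq !big_cons big_nil /=; lra.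
  exists vals; split => //.
    by rewrite all_cat all_nseq /= p0' q0 r0.
  move=> H.
  set k := alg vals.
  set d := alg (nseq m.+2 p ++ [:: q]).
  set A := online_alloc (m.+4) alg vals.
  set v := fun t : 'I_m.+4 => vals`_t.
  have vnn' : forall g, 0 <= v g by move=> g; apply: vnn.
  have omax_in : (ord_max : 'I_m.+4) \in A k by rewrite mem take_all.
  have vmax : v ord_max = r.
    rewrite /v nth_vals /=.
    have -> : (m.+3 < m.+2)%N = false by lia.
    have -> : (m.+3 == m.+2) = false by lia.
    by rewrite eqxx.
  case: (boolP [exists h : 'I_m.+4, (h != ord_max) && (h \in A k)]) =>
     [/existsP [h /andP [hne hin]] | /existsPn nok].
  + pose i : 'I_m.+3 := if k == ord0 then ord_max else ord0.
    have ik : i != k.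
      rewrite /i; case: (eqVneq k ord0) => [->|nk]; last by rewrite eq_sym.
      by rewrite -(inj_eq val_inj).
    have Hbar : r <= bval v (barset v (A k)).
      apply: le_trans (barset_ge _ hin).
      have : ord_max \in A k :\ h by rewrite in_setD1 omax_in eq_sym hne.
      move/(bval_ge1 vnn'); by rewrite vmax.
    have Hi : bval v (A i) <= 1 - r.
      have -> : 1 - r = \sum_(t : 'I_m.+4 | t != ord_max) v t.
        have tot : \sum_(t < m.+4) v t = 1.
          by rewrite -hsv [RHS](big_nth 0) svals big_mkord.
        by rewrite -tot (bigD1 ord_max) //= vmax addrC addrK.
      have sub : A i \subset [set t | t != ord_max].
        apply/subsetP => t tin; rewrite inE; apply/eqP => tmax.
        move: tin; rewrite tmax mem take_all => /eqP ki.
        by move: ik; rewrite -ki eqxx.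
      apply: le_trans (bval_sub vnn' sub) _.
      rewrite /bval (eq_bigl (fun t => t != ord_max)) ?lexx // => t.
      by rewrite inE.
    have := H i k.
    have := ler_wpM2l (ltW a0) Hbar.
    lra.
  + set Im := [set c t | t : 'I_m.+2].
    have kIm : k \notin Im.
      apply/imsetP => [[t _ kt]].
      have := nok (widen_ord le24 t); rewrite mem (take_small _ _ _ (ltn_ord t)).
      have -> : alg (nseq t.+1 p) = k by rewrite kt.
      rewrite eqxx andbT => /negP; apply.
      apply/eqP => /(congr1 val) /= e; by have := ltn_ord t; rewrite e aux1.
    have lt24 : (m.+2 < m.+4)%N by rewrite aux2.
    pose mid : 'I_m.+4 := Ordinal lt24.
    have emid : take mid.+1 vals = nseq m.+2 p ++ [:: q] := take_mid q r.
    have kd : k != d.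
      have := nok mid; rewrite mem -/vals emid.
      have -> : (mid != ord_max) by rewrite -(inj_eq val_inj) /= aux3.
      by rewrite /= eq_sym.
    have dIm : d \in Im.
      apply: contraT => dnIm.
      have : (1 < #|~: Im|)%N.
        by apply/card_gt1P; exists k, d; rewrite !inE kIm dnIm kd.
      have := cardsC Im; rewrite card_imset // !card_ord => HC.
      have -> : #|~: Im| = 1%N by apply/eqP; rewrite -(eqn_add2l m.+2) HC addn1.
      by [].
    case/imsetP: dIm => t0 _ dt0.
    pose t1 : 'I_m.+2 := if t0 == ord0 then ord_max else ord0.
    have t10 : t1 != t0.
      rewrite /t1; case: (eqVneq t0 ord0) => [->|]; last by rewrite eq_sym.
      by rewrite -(inj_eq val_inj).
    set i := c t1.
    have id : i != d.
      by rewrite dt0 /i (inj_eq cinj).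
    have Hbar : q <= bval v (barset v (A d)).
      have w0in : widen_ord le24 t0 \in A d by rewrite mem (take_small _ _ _ (ltn_ord t0)) dt0.
      have midin : mid \in A d :\ widen_ord le24 t0.
        rewrite in_setD1 mem -/vals emid eqxx andbT.
        by rewrite -(inj_eq val_inj) /= eq_sym (ltn_eqF (ltn_ord t0)).
      apply: le_trans (barset_ge _ w0in).
      apply: le_trans (bval_ge1 vnn' midin).
      by rewrite /v nth_vals /= ltnn eqxx.
    have Hi : bval v (A i) <= p.
      have sub : A i \subset [set widen_ord le24 t1].
        apply/subsetP => t; rewrite mem => /eqP Ht; rewrite inE.
        case: (ltnP t m.+2) => h.
        * rewrite take_small // in Ht.
          have : c (Ordinal h) = c t1 by exact: Ht.
          move/cinj => e; apply/eqP; apply: val_inj => /=; by rewrite -e.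
        * exfalso; case: (ltnP t m.+3) => h2.
            have et : (t : nat) = m.+2 by apply/eqP; rewrite eqn_leq -ltnS h2 h.
            move: Ht; rewrite et take_mid => Ht.
            by move: id; rewrite -Ht eqxx.
          have et : (t : nat) = m.+3 by apply/eqP; rewrite eqn_leq -ltnS (ltn_ord t) h2.
          move: Ht; rewrite et take_all => Ht.
          by move: kIm; rewrite /k Ht /i imset_f.
      apply: le_trans (bval_sub vnn' sub) _.
      by rewrite /bval big_set1 /v nth_vals /= ltn_ord.
    have := H i d.
    have := ler_wpM2l (ltW a0) Hbar.
    lra.
Qed.

End Helpers.

Theorem theorem3p3 (R : realType) (n : nat) (a : R) :
  (3 <= n)%N -> 0 < a <= 1 ->
  exists T : nat,
    forall alg : seq R -> 'I_n,
      exists vals : seq R,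
        [/\ size vals = T,
            all (fun x => 0 <= x) vals,
            \sum_(x <- vals) x = 1
          & ~ aEFX (fun t : 'I_T => vals`_t) a (online_alloc T alg vals)].
Proof.
move=> hn /andP [a0 a1].
case: n hn => [|[|[|m]]] // _.
exists m.+4 => alg.
set K : R := (m.+3)%:R + 2 / a.
set S : R := (m.+2)%:R * a + 2 + K.
have K0 : 0 < K by rewrite addr_gt0 ?ltr0Sn // divr_gt0.
have h1 : 0 < (m.+2)%:R * a by rewrite mulr_gt0 // ltr0Sn.
have S0 : 0 < S by rewrite /S; lra.
have Sn0 : S != 0 by rewrite lt0r_neq0.
apply: (@main_m R m alg a (a / S) (2 / S) (K / S)).
- exact: a0.
- by rewrite divr_gt0.
- by rewrite divr_ge0 ?ltW.
- by rewrite divr_ge0 ?ltW.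
- by rewrite mulrA -!mulrDl -/S divff.
- rewrite mulrA ltr_pM2r ?invr_gt0 //; lra.
- have e1 : 1 - K / S = ((m.+2)%:R * a + 2) / S.
    by rewrite -{1}(divff Sn0) -mulrBl /S addrK.
  rewrite e1 mulrA ltr_pM2r ?invr_gt0 //.
  have aK : a * K = (m.+3)%:R * a + 2.
    rewrite /K mulrDr [a * (_ / a)]mulrCA mulfV ?lt0r_neq0 // mulr1 mulrC.
    by [].
  rewrite aK -natr1 mulrDl mul1r; lra.
Qed.
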